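(* Let $G$ be a graph with a valid edge partition and let $C$ be a compatible cycle. Let $f$ be the unique edge of $C$ not in the 2-forest. Removing $f$ from the spanning tree splits it into exactly two trees $t_1$ and $t_2$. Then the number of edges of $C$ with one end in $t_1$ and the other in $t_2$ (counting $f$) is non-zero and even. Moreover, if $f'\neq f$ is any such edge of $C$ and we swap $f$ and $f'$ between the two parts of the edge partition, the result is a valid edge partition with the same associated vertex partition.
   Context: A spanning 2-forest is a spanning forest with exactly two trees (a tree may be a single vertex). A valid edge partition of a graph is a bipartition of its edge set such that one part is the edge set of a spanning tree and the other is the edge set of a spanning 2-forest; its associated vertex partition is given by the vertex sets of the two trees of the 2-forest. A cycle $C$ is compatible with the valid edge partition if all vertices of $C$ lie in the same part of the vertex partition and exactly one edge of $C$ lies in the spanning-tree part. *)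

(* Defs.v *)
From mathcomp Require Import all_boot.
Set Implicit Arguments. Unset Strict Implicit. Unset Printing Implicit Defensive.

(* A finite simple graph: vertex set = the finType T, edge set E : {set {set T}},
   every edge being a 2-element subset of T. *)
Definition simple_graph (T : finType) (E : {set {set T}}) : Prop :=
  forall e, e \in E -> #|e| = 2.

Definition adjF (T : finType) (F : {set {set T}}) : rel T :=
  fun x y => [set x; y] \in F.

Definition is_cycle (T : finType) (F : {set {set T}}) (c : seq T) : Prop :=
  [/\ uniq c, 3 <= size c & cycle (adjF F) c].

Definition cycle_edges (T : finType) (c : seq T) : {set {set T}} :=
  [set [set x; next c x] | x in c].

Definition acyclic (T : finType) (F : {set {set T}}) : Prop :=
  ~ exists c : seq T, is_cycle F c.

Definition comp (T : finType) (F : {set {set T}}) (x : T) : {set T} :=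
  [set y | connect (adjF F) x y].

Definition components (T : finType) (F : {set {set T}}) : {set {set T}} :=
  [set comp F x | x in T].

Definition spanning_tree (T : finType) (E F : {set {set T}}) : Prop :=
  [/\ F \subset E, acyclic F & #|components F| = 1].

Definition spanning_2forest (T : finType) (E F : {set {set T}}) : Prop :=
  [/\ F \subset E, acyclic F & #|components F| = 2].

Definition valid_edge_partition (T : finType) (E A B : {set {set T}}) : Prop :=
  [/\ A :|: B = E, A :&: B = set0, spanning_tree E A & spanning_2forest E B].

Definition vertex_partition (T : finType) (A B : {set {set T}}) : {set {set T}} :=
  components B.

Definition compatible (T : finType) (A B : {set {set T}}) (c : seq T) : Prop :=
  (exists2 P, P \in vertex_partition A B & {subset c <= P}) /\
  #|cycle_edges c :&: A| = 1.

Definition crosses (T : finType) (t1 t2 : {set T}) (e : {set T}) : bool :=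
  [exists x, exists y, [&& e == [set x; y], x \in t1 & y \in t2]].

(* Main.v *)
Require Import Defs.
From mathcomp Require Import all_boot.
Set Implicit Arguments. Unset Strict Implicit. Unset Printing Implicit Defensive.
Section Helpers.
Variable T : finType.
Implicit Types (F : {set {set T}}) (c : seq T).

Lemma adjF_sym F : symmetric (adjF F).
Proof. by move=> x y; rewrite /adjF setUC. Qed.

Lemma cF_sym F : connect_sym (adjF F).
Proof. exact/sym_connect_sym/adjF_sym. Qed.

Lemma compE F x y : Defs.comp F x = Defs.comp F y <-> connect (adjF F) x y.
Proof.
split.
  move=> h; have : y \in Defs.comp F y by rewrite inE connect0.
  by rewrite -h inE.
move=> h; apply/setP => z; rewrite !inE.
by rewrite (same_connect (cF_sym F) h).
Qed.

Lemma connect_mono F F' x y : F \subset F' ->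
  connect (adjF F) x y -> connect (adjF F') x y.
Proof.
move=> s; apply: connect_sub => a b h; apply: connect1.
by rewrite /adjF (subsetP s).
Qed.

Lemma closure (r : rel T) (P : T -> bool) x y :
  (forall y z, P y -> r y z -> P z) -> connect r x y -> P x -> P y.
Proof.
move=> H /connectP[p pth ->]; elim: p x pth => //= z p IH x /andP[rxz pth] Px.
exact: IH pth (H _ _ Px rxz).
Qed.

Lemma set2_eq (a b x y : T) : [set a; b] = [set x; y] ->
  (a = x /\ b = y) \/ (a = y /\ b = x).
Proof.
move=> h.
have ha : a \in [set x; y] by rewrite -h set21.
have hb : b \in [set x; y] by rewrite -h set22.
have hx : x \in [set a; b] by rewrite h set21.
have hy : y \in [set a; b] by rewrite h set22.
move: ha hb hx hy; rewrite !in_set2.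
case/orP=> /eqP ea; case/orP=> /eqP eb; subst a b.
- by move=> _ /orP[] /eqP ->; left.
- by left.
- by right.
- by move=> /orP[] /eqP -> _; right.
Qed.

Lemma L_rep F a b x y : connect (adjF ([set a; b] |: F)) x y ->
  connect (adjF F) a b -> connect (adjF F) x y.
Proof.
move=> h ab; apply: (closure (P := connect (adjF F) x)) h (connect0 _ _).
move=> z w xz; rewrite /adjF in_setU1 => /orP[/eqP /set2_eq [[ez ew]|[ez ew]]|zw]; subst.
- exact: connect_trans xz ab.
- by apply: connect_trans xz _; rewrite cF_sym.
- exact: connect_trans xz (connect1 zw).
Qed.

Lemma cycle_in F c : cycle (adjF F) c -> forall x, x \in c -> [set x; next c x] \in F.
Proof. by move=> h x hx; apply: (next_cycle h hx). Qed.

Lemma sub_acyclic F F' : F \subset F' -> acyclic F' -> acyclic F.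
Proof.
move=> s ac [c [u sz cy]]; apply: ac; exists c; split=> //.
apply: (cycle_from_next u) => x hx; rewrite /adjF (subsetP s) //.
exact: cycle_in cy x hx.
Qed.

Lemma dich F a b x : connect (adjF F) a x ->
  connect (adjF (F :\ [set a; b])) a x || connect (adjF (F :\ [set a; b])) b x.
Proof.
move=> h; apply: (closure (P := fun x => connect (adjF (F :\ [set a; b])) a x ||
  connect (adjF (F :\ [set a; b])) b x) _ h); last by rewrite connect0.
move=> y z /orP[hy|hy] yz; case: (eqVneq [set y; z] [set a; b]).
- by case/set2_eq=> [[_ ->]|[_ ->]]; rewrite connect0 ?orbT.
- by move=> ne; rewrite (connect_trans hy) // connect1 // /adjF in_setD1 ne.
- by case/set2_eq=> [[_ ->]|[_ ->]]; rewrite connect0 ?orbT.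
- by move=> ne; rewrite (connect_trans hy) ?orbT // connect1 // /adjF in_setD1 ne.
Qed.

End Helpers.
Section H2.
Variable T : finType.
Implicit Types (F : {set {set T}}) (c : seq T).

Lemma upath (e : rel T) x y : connect e x y ->
  exists p, [/\ path e x p, uniq (x :: p) & last x p = y].
Proof. by move/connectP=> [p pth ->]; case: (shortenP pth) => p' ? ? _; exists p'. Qed.

Lemma L1 F u v : acyclic F -> [set u; v] \in F -> u != v ->
  ~~ connect (adjF (F :\ [set u; v])) u v.
Proof.
move=> ac uvF nuv; apply/negP => /upath [p' [pth' up' ev]]; subst v.
case: p' pth' up' nuv uvF => [|w [|w2 p'']] pth' up' nuv uvF.
- by rewrite eqxx in nuv.
- by move: pth' => /=; rewrite /adjF /= in_setD1 uvF eqxx.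
apply: ac; exists [:: u, w, w2 & p'']; split => //.
rewrite /cycle rcons_path; apply/andP; split.
  apply: sub_path pth' => a b; rewrite /adjF in_setD1 => /andP[_ ->] //.
by rewrite adjF_sym.
Qed.

Lemma L_cyc F c x : is_cycle F c -> x \in c ->
  connect (adjF (F :\ [set x; next c x])) x (next c x).
Proof.
move=> [u sz cy] xc; case: (rot_to xc) => i s ri.
have u2 : uniq (x :: s) by rewrite -ri rot_uniq.
have sz2 : 3 <= size (x :: s) by rewrite -ri size_rot.
have cy2 : cycle (adjF F) (x :: s) by rewrite -ri rot_cycle.
rewrite -(next_rot i u) ri.
case: s ri u2 sz2 cy2 => [|a [|b s'']] // ri u2 _ cy2.
have -> : next [:: x, a, b & s''] x = a by rewrite /= eqxx.
rewrite cF_sym.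
have : path (adjF F) a (rcons (b :: s'') x) by move: cy2 => /= /andP[_].
rewrite rcons_path => /andP[pth lst].
apply/connectP; exists (rcons (b :: s'') x); last by rewrite last_rcons.
rewrite rcons_path; apply/andP; split.
  have sub : {in [pred y | y != x] &, subrel (adjF F) (adjF (F :\ [set x; a]))}.
    move=> y z /= yx zx; rewrite /adjF in_setD1 => ->; rewrite andbT.
    apply/negP => /eqP h; have : x \in [set y; z] by rewrite h set21.
    by rewrite in_set2 !(eq_sym x) (negbTE yx) (negbTE zx).
  apply: (sub_in_path sub) _ pth.
  apply/allP => y hy /=; apply/negP => /eqP ey; subst y.
  by move: u2; rewrite /= hy.
move: lst; rewrite /adjF in_setD1 => ->; rewrite andbT /=; apply/negP => /eqP h.
have : a \in [set last b s''; x] by rewrite h set22.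
have hl : last b s'' \in b :: s'' by exact: mem_last.
move: u2 => /= /and3P[hx ha _]; rewrite in_set2 => /orP[/eqP e|/eqP e]; subst.
- by rewrite hl in ha.
- by rewrite inE eqxx in hx.
Qed.

Lemma is_cycle_from F c : uniq c -> 3 <= size c ->
  (forall x, x \in c -> [set x; next c x] \in F) -> is_cycle F c.
Proof. by move=> u sz h; split => //; apply: cycle_from_next. Qed.

Lemma L_add F a b : acyclic F -> ~~ connect (adjF F) a b -> acyclic ([set a; b] |: F).
Proof.
move=> ac nab [c ic]; have [u sz cy] := ic.
case: (boolP [exists x, (x \in c) && ([set x; next c x] == [set a; b])]).
  case/existsP => x /andP[xc /eqP e].
  have := L_cyc ic xc; rewrite e => h.
  have h2 : connect (adjF F) x (next c x).
    apply: connect_mono h; apply/subsetP => z; rewrite in_setD1 in_setU1.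
    by case/andP => /negbTE -> .
  case/set2_eq: e => [[e1 e2]|[e1 e2]]; rewrite -e1 -e2 in nab.
  - by rewrite h2 in nab.
  - by rewrite cF_sym h2 in nab.
rewrite negb_exists => /forallP nx.
apply: ac; exists c; apply: is_cycle_from => // x xc.
have := cycle_in cy xc; rewrite in_setU1; have := nx x; rewrite xc /= => /negbTE ->.
by [].
Qed.

Lemma next_next c y : uniq c -> 3 <= size c -> y \in c -> next c (next c y) != y.
Proof.
move=> u sz yc; case: (rot_to yc) => i s ri.
have u2 : uniq (y :: s) by rewrite -ri rot_uniq.
have sz2 : 3 <= size (y :: s) by rewrite -ri size_rot.
rewrite -!(next_rot i u) ri.
case: s ri u2 sz2 => [|a [|b s'']] // ri u2 _.
move: u2 => /= /andP[]; rewrite !inE negb_or => /andP[ya /negbTE yb] /andP[/negbTE ab _].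
rewrite eqxx (eq_sym a y) (negbTE ya) eqxx.
by apply/negP => /eqP e; rewrite e eqxx in yb.
Qed.

Lemma L_inj c : uniq c -> 3 <= size c -> {in c &, injective (fun x => [set x; next c x])}.
Proof.
move=> u sz x y xc yc /set2_eq [[]//|[e1 e2]].
have := next_next u sz yc; by rewrite -e1 e2 eqxx.
Qed.

Lemma parity (g : T -> bool) (h : T -> T) s :
  odd (count (fun x => g x != g (h x)) s) = odd (count g s) (+) odd (count g (map h s)).
Proof.
elim: s => //= x s IH; rewrite !oddD IH.
by case: (g x); case: (g (h x)); case: (odd (count g s)); case: (odd (count g [seq h i | i <- s])).
Qed.

Lemma perm_next c : uniq c -> perm_eq (map (next c) c) c.
Proof.
move=> u; apply: uniq_perm => //.
  rewrite map_inj_in_uniq // => x y _ _ e.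
  by rewrite -(prev_next u x) e prev_next.
move=> y; apply/mapP/idP => [[x xc ->]|yc]; first by rewrite mem_next.
by exists (prev c y); rewrite ?mem_prev // next_prev.
Qed.

Lemma card_sel c (P : pred T) : uniq c -> #|[set x | (x \in c) && P x]| = count P c.
Proof.
move=> u; rewrite -size_filter; have /card_uniqP <- := filter_uniq P u.
by apply: eq_card => x; rewrite inE mem_filter andbC.
Qed.

End H2.
Lemma crosses_sym (T : finType) (t1 t2 e : {set T}) : crosses t1 t2 e = crosses t2 t1 e.
Proof.
by apply/existsP/existsP => [[x /existsP [y /and3P [/eqP -> hx hy]]]|
  [x /existsP [y /and3P [/eqP -> hx hy]]]]; exists y; apply/existsP; exists x;
  rewrite setUC eqxx hx hy.
Qed.
Unset Implicit Arguments.
Theorem lemma5p5 (T : finType) (E A B : {set {set T}}) (c : seq T) (f : {set T}) :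
  simple_graph E ->
  valid_edge_partition E A B ->
  is_cycle E c ->
  compatible A B c ->
  f \in cycle_edges c -> f \notin B ->
  #|components (A :\ f)| = 2 /\
  forall t1 t2, t1 \in components (A :\ f) -> t2 \in components (A :\ f) -> t1 != t2 ->
    (0 < #|[set e in cycle_edges c | crosses t1 t2 e]| /\
     ~~ odd #|[set e in cycle_edges c | crosses t1 t2 e]|) /\
    (forall f', f' \in cycle_edges c -> crosses t1 t2 f' -> f' != f ->
       valid_edge_partition E (f' |: (A :\ f)) (f |: (B :\ f')) /\
       vertex_partition (f' |: (A :\ f)) (f |: (B :\ f')) = vertex_partition A B).
Proof.
move=> sg [AB AiB [AE acA cA] [BE acB cB]] icE [_ cA1] fc fB.
have [uc c3 cyE] := icE.
have cE := cycle_in cyE.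
have fc0 := fc; move: fc0 => /imsetP [u uu ef].
set v := next c u in ef.
have fE : f \in E by rewrite ef cE.
have uv : u != v by have := sg _ fE; rewrite ef cards2; case: (u != v).
have fA : f \in A by move: fE; rewrite -AB in_setU (negbTE fB) orbF.
have uniqA : forall e, e \in cycle_edges c -> e \in A -> e = f.
  move: cA1 => /eqP /cards1P [g hg] e ec eA.
  have : f \in [set g] by rewrite -hg inE fc fA.
  have : e \in [set g] by rewrite -hg inE ec eA.
  by rewrite !in_set1 => /eqP -> /eqP ->.
have Aconn : forall x y, connect (adjF A) x y.
  move: cA => /eqP /cards1P [Q hQ] x y; apply/compE.
  have hx : Defs.comp A x \in components A by apply: imset_f.
  have hy : Defs.comp A y \in components A by apply: imset_f.
  by move: hx hy; rewrite hQ !in_set1 => /eqP -> /eqP ->.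
have nuv : ~~ connect (adjF (A :\ f)) u v by rewrite ef; apply: L1 => //; rewrite -ef.
set sd := connect (adjF (A :\ f)) u.
have dch : forall x, sd x || connect (adjF (A :\ f)) v x.
  by move=> x; rewrite /sd ef; apply: dich.
have sideV : forall x, connect (adjF (A :\ f)) v x = ~~ sd x.
  move=> x; case: (boolP (sd x)) => hx /=.
    apply/negP => hv; move: nuv; rewrite (connect_trans hx) //.
    by rewrite cF_sym.
  by have := dch x; rewrite (negbTE hx).
set cu := Defs.comp (A :\ f) u; set cv := Defs.comp (A :\ f) v.
have comps : components (A :\ f) = [set cu; cv].
  apply/setP => Q; rewrite in_set2; apply/imsetP/orP.
    case=> x _ ->; case/orP: (dch x) => h.
      by left; apply/eqP/compE; rewrite cF_sym.
    by right; apply/eqP/compE; rewrite cF_sym.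
  by case=> /eqP ->; [exists u | exists v].
have cuv : cu != cv by apply/negP => /eqP /compE; apply/negP.
split; first by rewrite comps cards2 cuv.
move=> t1 t2; rewrite comps !in_set2 => h1 h2 n12.
have Hcr : forall e, crosses t1 t2 e = crosses cu cv e.
  move=> e; case/orP: h1 => /eqP e1; case/orP: h2 => /eqP e2; subst t1 t2.
  - by rewrite eqxx in n12.
  - by [].
  - exact: crosses_sym.
  - by rewrite eqxx in n12.
have crossE : forall a b, crosses cu cv [set a; b] = (sd a != sd b).
  move=> a b; apply/existsP/idP.
    case=> x /existsP [y /and3P [/eqP e hx hy]].
    rewrite inE -/sd in hx; rewrite inE sideV in hy.
    by case/set2_eq: e => [[-> ->]|[-> ->]]; rewrite hx (negbTE hy).
  case: (boolP (sd a)) => ha /= hb.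
    exists a; apply/existsP; exists b; rewrite eqxx !inE -/sd ha sideV.
    by case: (sd b) hb.
  exists b; apply/existsP; exists a; rewrite setUC eqxx !inE -/sd sideV ha.
  by case: (sd b) hb.
have Scard : #|[set e in cycle_edges c | crosses t1 t2 e]| =
    count (fun x => sd x != sd (next c x)) c.
  have -> : [set e in cycle_edges c | crosses t1 t2 e] =
      (fun x => [set x; next c x]) @: [set x | (x \in c) && (sd x != sd (next c x))].
    apply/setP => e; rewrite inE Hcr; apply/andP/imsetP.
      case=> /imsetP [x xc ->] cr; exists x => //.
      by rewrite inE xc -crossE cr.
    case=> x; rewrite inE => /andP [xc d] ->; split; first by apply: imset_f.
    by rewrite crossE.
  rewrite card_in_imset ?card_sel //.
  move=> x y; rewrite !inE => /andP [xc _] /andP [yc _].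
  exact: L_inj uc c3 x y xc yc.
split.
  rewrite Scard; split.
    rewrite -has_count; apply/hasP; exists u => //.
    by rewrite /sd connect0 -/v (negbTE nuv).
  rewrite parity.
  have /permP -> := perm_next uc.
  by rewrite addbb.
move=> f' f'c cr nf'.
have f'c0 := f'c; move: f'c0 => /imsetP [y yc ef'].
set y' := next c y in ef'.
rewrite Hcr ef' crossE in cr.
have f'E : f' \in E by rewrite ef' cE.
have f'nA : f' \notin A by apply/negP => /(uniqA _ f'c) e; rewrite e eqxx in nf'.
have f'B : f' \in B by move: f'E; rewrite -AB in_setU (negbTE f'nA).
have yy' : y != y' by have := sg _ f'E; rewrite ef' cards2; case: (y != y').
have icB : is_cycle (f |: B) c.
  apply: is_cycle_from => // x xc; rewrite in_setU1.
  case: (boolP ([set x; next c x] \in A)) => h.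
    by rewrite (uniqA _ _ h) ?eqxx //; apply: imset_f.
  by move: (cE x xc); rewrite -AB in_setU (negbTE h) /= => ->; rewrite orbT.
have cuvB : connect (adjF B) u v.
  have := L_cyc icB uu; rewrite -/v -ef; apply: connect_mono.
  by apply/subsetP => e; rewrite in_setD1 in_setU1 => /andP [/negbTE -> ].
set B' := f |: (B :\ f').
have cB' : connect (adjF B') y y'.
  have := L_cyc icB yc; rewrite -/y' -ef'; apply: connect_mono.
  apply/subsetP => e; rewrite in_setD1 in_setU1 /B' in_setU1 in_setD1.
  by case/andP => ->; rewrite andTb.
have nB : ~~ connect (adjF (B :\ f')) u v.
  apply/negP => h; have nc := @L1 _ B y y' acB; rewrite -ef' in nc.
  move: (nc f'B yy') => /negP; apply.
  apply: (L_rep _ h); rewrite -ef; exact: cB'.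
have sameB : forall x z, connect (adjF B') x z = connect (adjF B) x z.
  move=> x z; apply/idP/idP => h.
    apply: (L_rep _ cuvB); rewrite -ef; apply: connect_mono h.
    by apply/subsetP => e; rewrite !in_setU1 in_setD1 => /orP [->|/andP [_ ->]]; rewrite ?orbT.
  apply: (L_rep _ cB'); rewrite -ef'; apply: connect_mono h.
  apply/subsetP => e eB; rewrite in_setU1 /B' in_setU1 in_setD1 eB.
  by case: (e == f'); rewrite ?orbT.
have compsB : components B' = components B.
  by apply: eq_imset => x; apply/setP => z; rewrite !inE sameB.
set A' := f' |: (A :\ f).
have nA : ~~ connect (adjF (A :\ f)) y y'.
  apply/negP => h; move: cr; rewrite /sd.
  case: (boolP (connect (adjF (A :\ f)) u y)) => hy.
    by rewrite (connect_trans hy h).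
  case: (boolP (connect (adjF (A :\ f)) u y')) => // hy'.
  by rewrite cF_sym in h; rewrite (connect_trans hy' h) in hy.
have sAA' : A :\ f \subset A' by apply/subsetP => e he; rewrite in_setU1 he orbT.
have ey : connect (adjF A') y y'.
  by apply: connect1; rewrite /adjF -ef' in_setU1 eqxx.
have cuvA : connect (adjF A') u v.
  case: (boolP (sd y)) => hy.
    have hy' : connect (adjF (A :\ f)) v y' by rewrite sideV; move: cr; rewrite hy; case: (sd y').
    apply: connect_trans (connect_mono sAA' hy) _.
    apply: connect_trans ey _; rewrite cF_sym; exact: connect_mono sAA' hy'.
  have hy' : sd y' by move: cr; rewrite (negbTE hy); case: (sd y').
  have hv : connect (adjF (A :\ f)) v y by rewrite sideV.
  apply: connect_trans (connect_mono sAA' hy') _.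
  rewrite cF_sym in ey; apply: connect_trans ey _; rewrite cF_sym.
  exact: connect_mono sAA' hv.
have conA : forall x, connect (adjF A') u x.
  move=> x; case/orP: (dch x) => h; first exact: connect_mono sAA' h.
  exact: connect_trans cuvA (connect_mono sAA' h).
have compsA : components A' = [set Defs.comp A' u].
  apply/setP => Q; rewrite in_set1; apply/imsetP/eqP.
    by case=> x _ ->; apply/compE; rewrite cF_sym.
  by move=> ->; exists u.
have dAB : forall e, e \in A -> e \in B = false.
  move=> e eA; apply/negP => eB.
  have : e \in A :&: B by rewrite inE eA eB.
  by rewrite AiB inE.
split; last by rewrite /vertex_partition compsB.
split.
- apply/setP => e; rewrite -AB !inE.
  case: (eqVneq e f) => [->|nef]; first by rewrite fA !orbT.
  case: (eqVneq e f') => [->|nef']; first by rewrite f'B !orbT.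
  by [].
- apply/setP => e; rewrite !inE.
  case: (eqVneq e f) => [->|nef]; first by rewrite eq_sym (negbTE nf').
  case: (eqVneq e f') => [->|nef'] /=; first by [].
  by case: (boolP (e \in A)) => // /dAB ->.
- split.
  + apply/subsetP => e; rewrite in_setU1 in_setD1 => /orP [/eqP ->|/andP [_ eA]] //.
    exact: (subsetP AE).
  + by rewrite /A' ef'; apply: (L_add _ nA); apply: sub_acyclic acA; apply: subsetDl.
  + by rewrite compsA cards1.
- split.
  + apply/subsetP => e; rewrite /B' in_setU1 in_setD1 => /orP [/eqP ->|/andP [_ eB]] //.
    exact: (subsetP BE).
  + rewrite /B' ef; apply: (L_add _ nB).
    by apply: sub_acyclic acB; apply: subsetDl.
  + by rewrite compsB.
Qed.
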